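(* Let $\vec A=(A_0,A_1)$, $\vec B=(B_0,B_1)$ be Banach couples and let $T:\vec A\to\vec B$ be an operator such that $T|_{A_j}:A_j\to B_j$ is invertible for $j=0,1$. Then the following are equivalent: (i) $(T|_{A_0})^{-1}y=(T|_{A_1})^{-1}y$ for all $y\in B_0\cap B_1$; (ii) $T:A_0+A_1\to B_0+B_1$ is invertible; (iii) for every interpolation functor $G$, the restriction $T|_{G(\vec A)}:G(\vec A)\to G(\vec B)$ is invertible.
   Context: An operator $T:\vec A\to\vec B$ between Banach couples is a linear map $A_0+A_1\to B_0+B_1$ whose restrictions are bounded $A_j\to B_j$. An interpolation functor $G$ assigns to each Banach couple $\vec A$ a Banach space $G(\vec A)$ with $A_0\cap A_1\subset G(\vec A)\subset A_0+A_1$ (continuously) such that every operator $T:\vec A\to\vec B$ maps $G(\vec A)$ boundedly into $G(\vec B)$. *)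

(* Defs.v *)
From HB Require Import structures.
From mathcomp Require Import all_boot all_order all_algebra.
From mathcomp Require Import boolp classical_sets reals.
Unset Implicit Arguments. Unset Strict Implicit. Unset Printing Implicit Defensive.
Import Order.TTheory GRing.Theory Num.Theory.
Local Open Scope ring_scope.
Local Open Scope classical_set_scope.

Section BanachCouples.
Variable R : realType.

Definition is_subspace (V : lmodType R) (A : set V) :=
  [/\ A 0, (forall x y, A x -> A y -> A (x + y))
     & (forall (k : R) x, A x -> A (k *: x))].

Definition is_norm_on (V : lmodType R) (A : set V) (n : V -> R) :=
  [/\ (forall x, A x -> 0 <= n x),
      (forall x, A x -> n x = 0 -> x = 0),
      (forall (k : R) x, A x -> n (k *: x) = `|k| * n x)
    & (forall x y, A x -> A y -> n (x + y) <= n x + n y)].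

Definition is_complete_on (V : lmodType R) (A : set V) (n : V -> R) :=
  forall u : nat -> V, (forall k, A (u k)) ->
    (forall e : R, 0 < e -> exists N, forall p q, (N <= p)%N -> (N <= q)%N ->
        n (u p - u q) < e) ->
    exists l, A l /\ (forall e : R, 0 < e -> exists N, forall p, (N <= p)%N ->
        n (u p - l) < e).

Definition is_Banach_on (V : lmodType R) (A : set V) (n : V -> R) :=
  [/\ is_subspace V A, is_norm_on V A n & is_complete_on V A n].

(* A Banach couple: two Banach spaces A0, A1 inside a common vector space,
   whose ambient space is their sum A0 + A1, and which are compatible
   (the sum functional is definite, i.e. A0 + A1 is Hausdorff). *)
Record couple := Couple {
  cV : lmodType R;
  cA0 : set cV;
  cA1 : set cV;
  cn0 : cV -> R;
  cn1 : cV -> R;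
  cA0_Banach : is_Banach_on cV cA0 cn0;
  cA1_Banach : is_Banach_on cV cA1 cn1;
  c_sum : forall v : cV, exists a0 a1, [/\ cA0 a0, cA1 a1 & v = a0 + a1];
  c_sep : forall v : cV,
      (forall e : R, 0 < e -> exists a0 a1,
          [/\ cA0 a0, cA1 a1, v = a0 + a1 & cn0 a0 + cn1 a1 < e]) -> v = 0
}.

Definition sum_norm (C : couple) (v : cV C) : R :=
  inf [set r | exists a0 a1,
         [/\ cA0 C a0, cA1 C a1, v = a0 + a1 & r = cn0 C a0 + cn1 C a1]].

Definition cap_set (C : couple) : set (cV C) := cA0 C `&` cA1 C.
Definition cap_norm (C : couple) (v : cV C) : R := Num.max (cn0 C v) (cn1 C v).

Definition bounded_between (V W : lmodType R) (X : set V) (nX : V -> R)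
    (Y : set W) (nY : W -> R) (f : V -> W) :=
  (forall x, X x -> Y (f x)) /\
  exists c : R, forall x, X x -> nY (f x) <= c * nX x.

Definition invertible_between (V W : lmodType R) (X : set V) (nX : V -> R)
    (Y : set W) (nY : W -> R) (f : V -> W) :=
  [/\ bounded_between V W X nX Y nY f,
      (forall x y, X x -> X y -> f x = f y -> x = y),
      (forall y, Y y -> exists2 x, X x & f x = y)
    & exists c : R, forall x, X x -> nX x <= c * nY (f x)].

Definition operator (A B : couple) (T : {linear cV A -> cV B}) :=
  bounded_between _ _ (cA0 A) (cn0 A) (cA0 B) (cn0 B) T /\
  bounded_between _ _ (cA1 A) (cn1 A) (cA1 B) (cn1 B) T.

Record interp_functor := InterpFunctor {
  Gset : forall C : couple, set (cV C);
  Gnorm : forall C : couple, cV C -> R;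
  G_Banach : forall C, is_Banach_on _ (Gset C) (Gnorm C);
  G_cap : forall C, bounded_between _ _ (cap_set C) (cap_norm C) (Gset C) (Gnorm C) id;
  G_sum : forall C, bounded_between _ _ (Gset C) (Gnorm C) setT (sum_norm C) id;
  G_interp : forall (A B : couple) (T : {linear cV A -> cV B}), operator A B T ->
      bounded_between _ _ (Gset A) (Gnorm A) (Gset B) (Gnorm B) T
}.

End BanachCouples.

Arguments is_subspace {R V}. Arguments is_norm_on {R V}.
Arguments is_complete_on {R V}. Arguments is_Banach_on {R V}.
Arguments cV {R}. Arguments cA0 {R}. Arguments cA1 {R}.
Arguments cn0 {R}. Arguments cn1 {R}.
Arguments sum_norm {R}. Arguments cap_set {R}. Arguments cap_norm {R}.
Arguments bounded_between {R V W}. Arguments invertible_between {R V W}.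
Arguments operator {R A B}.
Arguments Gset {R}. Arguments Gnorm {R}.

(* Main.v *)
Require Import Defs.
From HB Require Import structures.
From mathcomp Require Import all_boot all_order all_algebra.
From mathcomp Require Import boolp classical_sets reals.
From mathcomp Require Import lra.
Import GRing.Theory Num.Theory.
Import Order.TTheory.
Local Open Scope ring_scope.
Local Open Scope classical_set_scope.

Section Helpers.
Variable R : realType.

Lemma subN (V : lmodType R) (A : set V) : is_subspace A -> forall x, A x -> A (- x).
Proof. by case=> _ _ HZ x Ax; rewrite -scaleN1r; apply: HZ. Qed.

Lemma normN (V : lmodType R) (A : set V) n : is_norm_on A n ->
  forall x, A x -> n (- x) = n x.
Proof. by case=> _ _ HZ _ x Ax; rewrite -scaleN1r HZ // normrN normr1 mul1r. Qed.

Lemma norm0 (V : lmodType R) (A : set V) n : is_subspace A -> is_norm_on A n -> n 0 = 0.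
Proof.
case=> A0 _ _ [_ _ HZ _]; have := HZ 0 0 A0.
by rewrite scale0r normr0 mul0r.
Qed.

Section Inv.
Variables (V W : lmodType R) (T : {linear V -> W}).
Hypothesis inj : forall x y, T x = T y -> x = y.
Hypothesis surj : forall y, exists x, T x = y.
Definition Sf (y : W) : V := xget 0 [set x | T x = y].
Lemma SfK y : T (Sf y) = y.
Proof. have := @xgetPex _ 0 [set x | T x = y] (surj y). rewrite /Sf. by []. Qed.
Lemma Sf_lin : linear Sf.
Proof. move=> a u v; apply: inj; by rewrite linearP !SfK. Qed.
Definition Slin : {linear W -> V} := HB.pack Sf (GRing.isLinear.Build _ _ _ _ Sf Sf_lin).
Lemma SlinK y : T (Slin y) = y. Proof. exact: SfK. Qed.
Lemma SlinK' x : Slin (T x) = x. Proof. apply: inj; exact: SfK. Qed.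
End Inv.

Lemma sum_norm_le (C D : couple R) (x : cV C) (y : cV D) (M : R) : 0 < M ->
  (forall b0 b1, cA0 D b0 -> cA1 D b1 -> y = b0 + b1 -> exists a0 a1,
     [/\ cA0 C a0, cA1 C a1, x = a0 + a1 &
         cn0 C a0 + cn1 C a1 <= M * (cn0 D b0 + cn1 D b1)]) ->
  sum_norm C x <= M * sum_norm D y.
Proof.
move=> M0 H.
have lbC : lbound [set r | exists a0 a1,
         [/\ cA0 C a0, cA1 C a1, x = a0 + a1 & r = cn0 C a0 + cn1 C a1]] 0.
  move=> r [a0 [a1 [A0 A1 _ ->]]].
  case: (cA0_Banach _ C) => _ [N0 _ _ _] _; case: (cA1_Banach _ C) => _ [N1 _ _ _] _.
  by apply: addr_ge0; [apply: N0|apply: N1].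
rewrite -ler_pdivrMl //.
apply: lb_le_inf.
  have [b0 [b1 [B0 B1 ->]]] := c_sum _ D y.
  by exists (cn0 D b0 + cn1 D b1), b0, b1.
move=> r [b0 [b1 [B0 B1 yE ->]]].
have [a0 [a1 [A0 A1 xE Hle]]] := H b0 b1 B0 B1 yE.
rewrite ler_pdivrMl //; apply: le_trans Hle.
apply: ge_inf; first by exists 0.
by exists a0, a1.
Qed.

End Helpers.

Section Cap.
Variable R : realType.

Lemma cap_Banach (C : couple R) : is_Banach_on (cap_set C) (cap_norm C).
Proof.
case: (cA0_Banach _ C) => [SS0 NN0 Cp0].
case: (cA1_Banach _ C) => [SS1 NN1 Cp1].
have [Z0 D0 S0] := SS0; have [N0 Df0 H0 Tr0] := NN0.
have [Z1 D1 S1] := SS1; have [N1 Df1 H1 Tr1] := NN1.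
split.
- split; first by split.
  + by move=> x y [? ?] [? ?]; split; [apply: D0|apply: D1].
  + by move=> k x [? ?]; split; [apply: S0|apply: S1].
- split.
  + move=> x [a b]; rewrite /cap_norm le_max; by rewrite N0.
  + move=> x [a b]; rewrite /cap_norm => E; apply: Df0 => //.
    apply/eqP; rewrite eq_le N0 // andbT -E le_max lexx //.
  + move=> k x [a b]; rewrite /cap_norm H0 // H1 // maxr_pMr //.
  + move=> x y [a b] [c d]; rewrite /cap_norm ge_max; apply/andP; split.
    * apply: le_trans (Tr0 _ _ a c) _; apply: lerD; rewrite le_max lexx //.
    * apply: le_trans (Tr1 _ _ b d) _; apply: lerD; rewrite le_max lexx ?orbT //.
- move=> u uC Cau.
  have Cau0 : forall e : R, 0 < e -> exists N, forall p q, (N <= p)%N -> (N <= q)%N ->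
      cn0 C (u p - u q) < e.
    move=> e e0; have [N HN] := Cau e e0; exists N => p q Hp Hq.
    by apply: le_lt_trans (HN p q Hp Hq); rewrite /cap_norm le_max lexx.
  have Cau1 : forall e : R, 0 < e -> exists N, forall p q, (N <= p)%N -> (N <= q)%N ->
      cn1 C (u p - u q) < e.
    move=> e e0; have [N HN] := Cau e e0; exists N => p q Hp Hq.
    by apply: le_lt_trans (HN p q Hp Hq); rewrite /cap_norm le_max lexx orbT.
  have [l0 [L0 Hl0]] := Cp0 u (fun k => (uC k).1) Cau0.
  have [l1 [L1 Hl1]] := Cp1 u (fun k => (uC k).2) Cau1.
  have El : l0 = l1.
    apply/eqP; rewrite -subr_eq0; apply/eqP; apply: c_sep => e e0.
    have e20 : 0 < e / 2 by rewrite divr_gt0.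
    have [N0' HN0] := Hl0 _ e20; have [N1' HN1] := Hl1 _ e20.
    pose p := maxn N0' N1'.
    have hp0 : (N0' <= p)%N by rewrite leq_maxl.
    have hp1 : (N1' <= p)%N by rewrite leq_maxr.
    exists (- (u p - l0)), (u p - l1); split.
    + by apply: (subN _ _ _ SS0); apply: D0 => //; [exact: (uC p).1|exact: (subN _ _ _ SS0)].
    + by apply: D1 => //; [exact: (uC p).2|exact: (subN _ _ _ SS1)].
    + by rewrite opprB addrA subrK.
    + rewrite (normN _ _ _ _ NN0); last first.
        by apply: D0; [exact: (uC p).1|exact: (subN _ _ _ SS0)].
      have := HN0 p hp0; have := HN1 p hp1; lra.
  exists l0; split; first by split=> //; rewrite El.
  move=> e e0; have [N0' HN0] := Hl0 _ e0; have [N1' HN1] := Hl1 _ e0.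
  exists (maxn N0' N1') => p hp; rewrite /cap_norm gt_max; apply/andP; split.
    by apply: HN0; apply: leq_trans hp; rewrite leq_maxl.
  by rewrite El; apply: HN1; apply: leq_trans hp; rewrite leq_maxr.
Qed.

Definition capG : interp_functor R.
Proof.
refine (@InterpFunctor R (fun C => cap_set C) (fun C => cap_norm C) cap_Banach _ _ _).
- move=> C; split=> // ; exists 1 => x _; rewrite mul1r lexx //.
- move=> C; split=> //; exists 1 => x [a b]; rewrite mul1r.
  case: (cA1_Banach _ C) => [[Z1 D1 S1] HN1 Cp1].
  apply: le_trans (_ : cn0 C x + cn1 C 0 <= _).
    apply: ge_inf.
      exists 0 => r [a0 [a1 [A0 A1 _ ->]]].
      case: (cA0_Banach _ C) => _ [N0 _ _ _] _; case: HN1 => N1 _ _ _.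
      by apply: addr_ge0; [apply: N0|apply: N1].
    by exists x, 0; split=> //; rewrite addr0.
  by rewrite (norm0 _ _ _ _ (And3 Z1 D1 S1) HN1) addr0 /cap_norm le_max lexx.
- move=> A B T [[T0 [c0 Hc0]] [T1 [c1 Hc1]]]; split.
    by move=> x [a b]; split; [apply: T0|apply: T1].
  exists (1 + `|c0| + `|c1|) => x [a b].
  case: (cA0_Banach _ A) => _ [N0 _ _ _] _; case: (cA1_Banach _ A) => _ [N1 _ _ _] _.
  have n0 := N0 x a; have n1 := N1 x b.
  have m0 : cn0 A x <= cap_norm A x by rewrite /cap_norm le_max lexx.
  have m1 : cn1 A x <= cap_norm A x by rewrite /cap_norm le_max lexx orbT.
  have h0 := Hc0 x a; have h1 := Hc1 x b.
  have k0 : c0 * cn0 A x <= (1 + `|c0| + `|c1|) * cap_norm A x.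
    apply: le_trans (_ : `|c0| * cn0 A x <= _).
      by apply: ler_wpM2r => //; apply: ler_norm.
    apply: le_trans (_ : (1 + `|c0| + `|c1|) * cn0 A x <= _).
      by apply: ler_wpM2r => //; have := normr_ge0 c1; lra.
    by apply: ler_wpM2l => //; have := normr_ge0 c1; have := normr_ge0 c0; lra.
  have k1 : c1 * cn1 A x <= (1 + `|c0| + `|c1|) * cap_norm A x.
    apply: le_trans (_ : `|c1| * cn1 A x <= _).
      by apply: ler_wpM2r => //; apply: ler_norm.
    apply: le_trans (_ : (1 + `|c0| + `|c1|) * cn1 A x <= _).
      by apply: ler_wpM2r => //; have := normr_ge0 c0; lra.
    by apply: ler_wpM2l => //; have := normr_ge0 c1; have := normr_ge0 c0; lra.
  rewrite /cap_norm ge_max; apply/andP; split.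
    exact: le_trans h0 k0.
  exact: le_trans h1 k1.
Defined.

Lemma capG_set (C : couple R) : Gset capG C = cap_set C. Proof. by []. Qed.
Lemma capG_norm (C : couple R) : Gnorm capG C = cap_norm C. Proof. by []. Qed.

End Cap.

Theorem proposition4p2 (R : realType) (A B : couple R)
  (T : {linear cV A -> cV B}) (hT : operator T)
  (h0 : invertible_between (cA0 A) (cn0 A) (cA0 B) (cn0 B) T)
  (h1 : invertible_between (cA1 A) (cn1 A) (cA1 B) (cn1 B) T) :
  [<-> (* (i) (T|A0)^-1 y = (T|A1)^-1 y for y in B0 /\ B1 *)
       (forall y, cA0 B y -> cA1 B y ->
          forall x0 x1, cA0 A x0 -> cA1 A x1 -> T x0 = y -> T x1 = y -> x0 = x1);
       (* (ii) T : A0 + A1 -> B0 + B1 invertible *)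
       invertible_between setT (sum_norm A) setT (sum_norm B) T;
       (* (iii) T : G(A) -> G(B) invertible for every interpolation functor G *)
       (forall G : interp_functor R,
          invertible_between (Gset G A) (Gnorm G A) (Gset G B) (Gnorm G B) T)].
Proof.
have [[TB0 [c0 Hc0]] inj0 surj0 [d0 Hd0]] := h0.
have [[TB1 [c1 Hc1]] inj1 surj1 [d1 Hd1]] := h1.
have [SA0 NA0 _] := cA0_Banach _ A; have [SA1 NA1 _] := cA1_Banach _ A.
have [SB0 NB0 _] := cA0_Banach _ B; have [SB1 NB1 _] := cA1_Banach _ B.
have [_ _ SA1Z] := SA1.
have [NA0p _ _ _] := NA0; have [NA1p _ _ _] := NA1.
have [NB0p _ _ _] := NB0; have [NB1p _ _ _] := NB1.
have scal : forall (c n : R) (M : R), 0 <= n -> `|c| + 1 <= M -> c * n <= M * n.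
  move=> c n M n0 cM; apply: ler_wpM2r => //.
  by apply: le_trans cM; have := ler_norm c; lra.
tfae.
-
  move=> Hi.
  have inj : forall x y, T x = T y -> x = y.
    move=> x y Exy; apply/eqP; rewrite -subr_eq0; apply/eqP.
    have [a0 [a1 [A0 A1 E]]] := c_sum _ A (x - y).
    have TE : T a0 = T (- a1).
      apply/eqP; rewrite raddfN -addr_eq0 -linearD -E linearB Exy subrr //.
    rewrite E; apply/eqP; rewrite addr_eq0; apply/eqP.
    apply: (Hi (T a0)) => //; first exact: TB0.
      rewrite TE; apply: TB1; exact: (subN _ _ _ SA1).
    exact: (subN _ _ _ SA1).
  split.
  + split=> //; exists (1 + `|c0| + `|c1|) => x _.
    apply: sum_norm_le; first by have := normr_ge0 c0; have := normr_ge0 c1; lra.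
    move=> a0 a1 A0 A1 E; exists (T a0), (T a1); split.
    * exact: TB0.
    * exact: TB1.
    * by rewrite E linearD.
    * have := Hc0 a0 A0; have := Hc1 a1 A1.
      have := scal c0 (cn0 A a0) (1 + `|c0| + `|c1|) (NA0p _ A0).
      have := scal c1 (cn1 A a1) (1 + `|c0| + `|c1|) (NA1p _ A1).
      have := normr_ge0 c0; have := normr_ge0 c1; rewrite mulrDr; lra.
  + by move=> x y _ _; apply: inj.
  + move=> y _; have [b0 [b1 [B0 B1 ->]]] := c_sum _ B y.
    have [x0 A0 <-] := surj0 b0 B0; have [x1 A1 <-] := surj1 b1 B1.
    by exists (x0 + x1) => //; rewrite linearD.
  + exists (1 + `|d0| + `|d1|) => x _.
    apply: sum_norm_le; first by have := normr_ge0 d0; have := normr_ge0 d1; lra.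
    move=> b0 b1 B0 B1 E.
    have [x0 A0 Ex0] := surj0 b0 B0; have [x1 A1 Ex1] := surj1 b1 B1.
    exists x0, x1; split => //.
    * by apply: inj; rewrite linearD Ex0 Ex1.
    * have := Hd0 x0 A0; have := Hd1 x1 A1; rewrite Ex0 Ex1.
      have := scal d0 (cn0 B b0) (1 + `|d0| + `|d1|) (NB0p _ B0).
      have := scal d1 (cn1 B b1) (1 + `|d0| + `|d1|) (NB1p _ B1).
      have := normr_ge0 d0; have := normr_ge0 d1; rewrite mulrDr; lra.
-
  case=> _ injS surjS _ G.
  have inj : forall x y, T x = T y -> x = y by move=> x y; apply: injS.
  have surj : forall y, exists x, T x = y.
    by move=> y; have [x _ Ex] := surjS y I; exists x.
  pose S := @Slin R _ _ T inj surj.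
  have SK : forall y, T (S y) = y by move=> y; exact: SlinK.
  have SK' : forall x, S (T x) = x by move=> x; exact: SlinK'.
  have Sop : operator S.
    split.
    + split.
        move=> y B0; have [x A0 Ex] := surj0 y B0.
        by rewrite -Ex SK'.
      exists d0 => y B0; have [x A0 Ex] := surj0 y B0.
      by rewrite -Ex SK'; apply: Hd0.
    + split.
        move=> y B1; have [x A1 Ex] := surj1 y B1.
        by rewrite -Ex SK'.
      exists d1 => y B1; have [x A1 Ex] := surj1 y B1.
      by rewrite -Ex SK'; apply: Hd1.
  have [SG [e He]] := G_interp _ G B A S Sop.
  split.
  + exact: (G_interp _ G A B T hT).
  + by move=> x y _ _; apply: inj.
  + by move=> y Gy; exists (S y); [apply: SG|apply: SK].
  + exists e => x Gx; have := He (T x); rewrite SK'; apply.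
    by have [TG _] := G_interp _ G A B T hT; apply: TG.
-
  move=> Hiii y B0 B1 x0 x1 A0 A1 E0 E1.
  have [_ _ surjC _] := Hiii (capG R).
  have [x [xA0 xA1] Ex] := surjC y (conj B0 B1).
  have -> : x0 = x by apply: inj0 => //; rewrite E0 Ex.
  by apply: inj1 => //; rewrite E1 Ex.
Qed.
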